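(* Let $1\le l,m\le n$ with $l+m>n$, and set $s=l+m-n$, $r=n-l+1$. Let $a=(a_{ij})$ be an $m\times n$ matrix, $b=(b_{ij})$ an $n\times l$ matrix, and $c=ab$ (an $m\times l$ matrix), over a commutative ring containing $\mathbb Q$. Then $$\det\big(a_{ij}\big)_{1\le i,j\le m}\cdot\det\big(b_{ij}\big)_{r\le i\le n,\,1\le j\le l}=\frac{1}{s!}\sum_{\sigma\in S_m}\sum_{\tau\in S_l}\operatorname{sgn}(\sigma)\operatorname{sgn}(\tau)\prod_{k=1}^{r-1}a_{\sigma(k),k}\prod_{t=1}^{l-s}b_{m+t,\tau(s+t)}\prod_{u=1}^{s}c_{\sigma(r-1+u),\tau(u)}.$$ In particular, for $W=lV\oplus mV^*$, the product of the left minor of order $m$ of $\overline{V^*}$ (columns $1,\dots,m$) and the lower minor of order $l$ of $\overline V$ (rows $r,\dots,n$) is expressed as a polynomial in left minors of order $m-s$ of $\overline{V^*}$, lower minors of order $l-s$ of $\overline V$, and entries of $\overline{V^*}\,\overline V$.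
   Context: $S_m$ is the symmetric group on $\{1,\dots,m\}$. $\overline V$ is the $n\times l$ matrix of coordinate functions on $lV$, $\overline{V^*}$ the $m\times n$ matrix of coordinate functions on $mV^*$ (with $a=\overline{V^*}$, $b=\overline V$ in the application). A left minor uses the first columns, a lower minor uses the last rows. *)

(* Defs.v *)
From HB Require Import structures.
From mathcomp Require Import all_boot all_order all_algebra all_fingroup.
Set Implicit Arguments. Unset Strict Implicit. Unset Printing Implicit Defensive.
Import GRing.Theory.
Local Open Scope ring_scope.

(* Entry (i, j) of a matrix, with 0-based natural-number indices;
   0 outside the range (never used out of range in the statement). *)
Definition ent (R : Type) (z : R) (p q : nat) (A : 'M[R]_(p, q)) (i j : nat) : R :=
  match @insub _ (fun k => k < p)%N 'I_p i, @insub _ (fun k => k < q)%N 'I_q j with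
  | Some i', Some j' => A i' j'
  | _, _ => z
  end.

Notation "A `[ i , j ]" := (ent 0 A i j) (at level 10, format "A `[ i ,  j ]").

(* Action of a permutation of 'I_m on a 0-based natural index
   (identity outside the range). *)
Definition pact (m : nat) (s : 'S_m) (k : nat) : nat :=
  match @insub _ (fun x => x < m)%N 'I_m k with
  | Some k' => val (s k')
  | None => k
  end.

(* Main.v *)
Require Import Defs.
From HB Require Import structures.
From mathcomp Require Import all_boot all_order all_algebra all_fingroup.
From mathcomp Require Import zify ring.
Import GRing.Theory.
Local Open Scope ring_scope.
Lemma ent_val (R : Type) (z : R) p q (A : 'M[R]_(p, q)) (i : 'I_p) (j : 'I_q) :
  ent z A i j = A i j.
Proof.
rewrite /ent; case: insubP => [i' _ /val_inj ->|]; last by rewrite ltn_ord.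
by case: insubP => [j' _ /val_inj ->|]; last by rewrite ltn_ord.
Qed.

Lemma pact_val m (s : 'S_m) (i : 'I_m) : pact s i = s i.
Proof. by rewrite /pact; case: insubP => [i' _ /val_inj ->|]; last by rewrite ltn_ord. Qed.

Lemma pact_lt m (s : 'S_m) x : (x < m)%N -> (pact s x < m)%N.
Proof. by move=> h; rewrite -[x]/(val (Ordinal h)) pact_val. Qed.

Lemma entM (R : comRingType) m n l (a : 'M[R]_(m, n)) (b : 'M[R]_(n, l)) i j :
  (i < m)%N -> (j < l)%N -> (a *m b)`[i, j] = \sum_(k < n) a`[i, k] * b`[k, j].
Proof.
move=> hi hj; rewrite -[i]/(val (Ordinal hi)) -[j]/(val (Ordinal hj)) ent_val mxE.
by apply: eq_bigr => k _; rewrite !ent_val.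
Qed.
Lemma sum_delta (R : comNzRingType) N (F : 'I_N -> R) k0 :
  \sum_(k < N) F k * (k == k0)%:R = F k0.
Proof.
rewrite (bigD1 k0) //= eqxx mulr1 big1 ?addr0 // => k /negbTE ->.
by rewrite mulr0.
Qed.

Lemma signA (R : comNzRingType) p s (X : nat -> nat -> R) (pi : 'S_s) :
  \det (\matrix_(i < p + s, j < p + s)
          X i (if (j < p)%N then (j : nat) else (p + pact pi (j - p))%N))
  = (-1) ^+ pi * \det (\matrix_(i < p + s, j < p + s) X i j).
Proof.
set M := \matrix_(i < p + s, j < p + s) X i j.
pose P : 'M[R]_(p + s) := block_mx 1%:M 0 0 (perm_mx pi)^T.
have -> : \matrix_(i < p + s, j < p + s)
          X i (if (j < p)%N then (j : nat) else (p + pact pi (j - p))%N) = M *m P.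
  apply/matrixP => i j; rewrite !mxE big_split_ord /=.
  rewrite -[j](splitK j); case: (split j) => j' /=.
    rewrite ltn_ord (eq_bigr (fun k => M i (lshift s k) * (k == j')%:R)); last first.
      by move=> k _; rewrite block_mxEul !mxE.
    rewrite sum_delta big1 ?addr0 ?mxE //.
    by move=> k _; rewrite block_mxEdl !mxE mulr0.
  rewrite ltnNge leq_addr /= addKn pact_val.
  rewrite big1 ?add0r; last by move=> k _; rewrite block_mxEur !mxE mulr0.
  rewrite (eq_bigr (fun k => M i (rshift p k) * (k == pi j')%:R)); last first.
    by move=> k _; rewrite block_mxEdr !mxE eq_sym.
  by rewrite sum_delta mxE.
rewrite det_mulmx det_ublock det1 mul1r det_tr det_perm mulrC.
done.
Qed.

Lemma signB (R : comNzRingType) s q (Y : nat -> nat -> R) (pi : 'S_s) :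
  \det (\matrix_(i < s + q, j < s + q)
          Y (if (i < s)%N then pact pi i else (i : nat)) j)
  = (-1) ^+ pi * \det (\matrix_(i < s + q, j < s + q) Y i j).
Proof.
set M := \matrix_(i < s + q, j < s + q) Y i j.
pose P : 'M[R]_(s + q) := block_mx (perm_mx pi) 0 0 1%:M.
have -> : \matrix_(i < s + q, j < s + q)
          Y (if (i < s)%N then pact pi i else (i : nat)) j = P *m M.
  apply/matrixP => i j; rewrite !mxE big_split_ord /=.
  rewrite -[i](splitK i); case: (split i) => i' /=.
    rewrite ltn_ord pact_val.
    rewrite (eq_bigr (fun k => M (lshift q k) j * (k == pi i')%:R)); last first.
      by move=> k _; rewrite block_mxEul !mxE mulrC eq_sym.
    rewrite sum_delta big1 ?addr0 ?mxE //.
    by move=> k _; rewrite block_mxEur !mxE mul0r.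
  rewrite ltnNge leq_addr /=.
  rewrite big1 ?add0r; last by move=> k _; rewrite block_mxEdl !mxE mul0r.
  rewrite (eq_bigr (fun k => M (rshift s k) j * (k == i')%:R)); last first.
    by move=> k _; rewrite block_mxEdr !mxE mulrC eq_sym.
  by rewrite sum_delta mxE.
by rewrite det_mulmx det_ublock det1 mulr1 det_perm.
Qed.

Lemma det0_col (R : comNzRingType) N (M : 'M[R]_N) j1 j2 :
  j1 != j2 -> (forall i, M i j1 = M i j2) -> \det M = 0.
Proof.
move=> ne h; rewrite -det_tr; apply: (determinant_alternate ne) => i.
by rewrite !mxE.
Qed.

Lemma det0_row (R : comNzRingType) N (M : 'M[R]_N) i1 i2 :
  i1 != i2 -> (forall j, M i1 j = M i2 j) -> \det M = 0.
Proof. by move=> ne h; apply: (determinant_alternate ne) => j. Qed.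

Definition kf s N (k : {ffun 'I_s -> 'I_N}) (u : nat) : nat :=
  match @insub _ (fun x => x < s)%N 'I_s u with
  | Some u' => val (k u')
  | None => 0%N
  end.

Arguments kf {s N}.

Lemma kf_val s N (k : {ffun 'I_s -> 'I_N}) (u : 'I_s) : kf k u = k u.
Proof. by rewrite /kf; case: insubP => [i' _ /val_inj ->|]; last by rewrite ltn_ord. Qed.

Lemma sumGA (R : comNzRingType) p s q (a : 'M[R]_(p + s, p + s + q))
   (k : {ffun 'I_s -> 'I_(p + s + q)}) :
  \sum_(sigma : 'S_(p + s)) ((-1) ^+ sigma * (\prod_(i < p) a`[pact sigma i, i]) *
         \prod_(u < s) a`[pact sigma (p + u), k u])
  = \det (\matrix_(i < p + s, j < p + s)
            a`[i, if (j < p)%N then (j : nat) else kf k (j - p)%N]).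
Proof.
rewrite -det_tr /determinant; apply: eq_bigr => sg _.
rewrite big_split_ord /= mulrA; congr (_ * _ * _).
  by apply: eq_bigr => i _; rewrite !mxE -pact_val /= ltn_ord.
apply: eq_bigr => u _; rewrite !mxE -pact_val /= ltnNge leq_addr /= addKn kf_val.
done.
Qed.

Lemma sumGB (R : comNzRingType) p s q (b : 'M[R]_(p + s + q, s + q))
   (k : {ffun 'I_s -> 'I_(p + s + q)}) :
  \sum_(tau : 'S_(s + q)) ((-1) ^+ tau * (\prod_(t < q) b`[p + s + t, pact tau (s + t)]) *
         \prod_(u < s) b`[k u, pact tau u])
  = \det (\matrix_(i < s + q, j < s + q)
            b`[if (i < s)%N then kf k i else (p + s + (i - s))%N, j]).
Proof.
rewrite /determinant; apply: eq_bigr => sg _.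
rewrite big_split_ord /= -mulrA [X in _ * X]mulrC; congr (_ * (_ * _)).
  by apply: eq_bigr => u _; rewrite !mxE -pact_val /= ltn_ord kf_val.
apply: eq_bigr => t _; rewrite !mxE -pact_val /= ltnNge leq_addr /= addKn.
done.
Qed.
Definition mk p s q (pi : 'S_s) : {ffun 'I_s -> 'I_(p + s + q)} :=
  [ffun u => lshift q (rshift p (pi u))].
Arguments mk p {s} q pi.

Lemma kf_mk p s q (pi : 'S_s) u : (u < s)%N -> kf (mk p q pi) u = (p + pact pi u)%N.
Proof. by move=> h; rewrite -[u]/(val (Ordinal h)) kf_val pact_val ffunE. Qed.

Lemma mk_inj p s q : injective (@mk p s q).
Proof.
move=> p1 p2 /ffunP h; apply/permP => u; apply: val_inj.
by move: (h u); rewrite !ffunE => /(congr1 val) /= /eqP; rewrite eqn_add2l => /eqP.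
Qed.

Lemma good (R : comNzRingType) p s q (k : {ffun 'I_s -> 'I_(p + s + q)})
   (X Y : nat -> nat -> R) :
  \det (\matrix_(i < p + s, j < p + s)
            X i (if (j < p)%N then (j : nat) else kf k (j - p)%N)) != 0 ->
  \det (\matrix_(i < s + q, j < s + q)
            Y (if (i < s)%N then kf k i else (p + s + (i - s))%N) j) != 0 ->
  exists pi : 'S_s, k = mk p q pi.
Proof.
move=> hA hB.
have h1 : forall u, (p <= k u)%N.
  move=> u; rewrite leqNgt; apply/negP => ku; move/eqP: hA; apply.
  apply: (@det0_col _ _ _ (lshift s (Ordinal ku)) (rshift p u)).
    by rewrite -val_eqE /= neq_ltn (leq_trans ku (leq_addr _ _)).
  by move=> i; rewrite !mxE /= ku ltnNge leq_addr /= addKn kf_val.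
have h2 : forall u, (k u < p + s)%N.
  move=> u; rewrite ltnNge; apply/negP => ku; move/eqP: hB; apply.
  have ht : (k u - (p + s) < q)%N by have := ltn_ord (k u); lia.
  apply: (@det0_row _ _ _ (lshift q u) (rshift s (Ordinal ht))).
    by rewrite -val_eqE /= neq_ltn (leq_trans (ltn_ord u) (leq_addr _ _)).
  move=> j; rewrite !mxE /= ltn_ord ltnNge leq_addr /= addKn kf_val.
  by congr (Y _ _); lia.
have h3 : injective k.
  move=> u1 u2 e; apply/eqP; apply/negP => /negP ne; move/eqP: hA; apply.
  apply: (@det0_col _ _ _ (rshift p u1) (rshift p u2)).
    by rewrite -val_eqE /= eqn_add2l.
  by move=> i; rewrite !mxE /= !ltnNge !leq_addr /= !addKn !kf_val e.
pose f (u : 'I_s) : 'I_s := Ordinal (etrans (ltn_subLR _ (h1 u)) (h2 u)).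
have finj : injective f.
  move=> u1 u2 /(congr1 val) /= e; apply: h3; apply: val_inj.
  change (nat_of_ord (k u1) = nat_of_ord (k u2)); have := h1 u1; have := h1 u2; lia.
exists (perm finj); apply/ffunP => u; apply: val_inj.
by rewrite ffunE /= permE /=; have := h1 u; lia.
Qed.

Lemma core (R : comNzRingType) p s q (a : 'M[R]_(p + s, p + s + q))
  (b : 'M[R]_(p + s + q, s + q)) :
  \sum_(sigma : 'S_(p + s)) \sum_(tau : 'S_(s + q))
      ((-1) ^+ sigma * (-1) ^+ tau *
       (\prod_(k < p) a`[pact sigma k, k]) *
       (\prod_(t < q) b`[p + s + t, pact tau (s + t)]) *
       (\prod_(u < s) (a *m b)`[pact sigma (p + u), pact tau u]))
  = (\det (\matrix_(i < p + s, j < p + s) a`[i, j]) *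
     \det (\matrix_(i < s + q, j < s + q) b`[p + i, j])) *+ s`!.
Proof.
pose GA (sg : 'S_(p + s)) (k : {ffun 'I_s -> 'I_(p + s + q)}) :=
  (-1) ^+ sg * (\prod_(i < p) a`[pact sg i, i]) * \prod_(u < s) a`[pact sg (p + u), k u].
pose GB (tau : 'S_(s + q)) (k : {ffun 'I_s -> 'I_(p + s + q)}) :=
  (-1) ^+ tau * (\prod_(t < q) b`[p + s + t, pact tau (s + t)]) *
         \prod_(u < s) b`[k u, pact tau u].
transitivity (\sum_(sg : 'S_(p + s)) \sum_(tau : 'S_(s + q))
                \sum_(k : {ffun 'I_s -> 'I_(p + s + q)}) GA sg k * GB tau k).
  apply: eq_bigr => sg _; apply: eq_bigr => tau _.
  rewrite (eq_bigr (fun u : 'I_s => \sum_(j < p + s + q)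
              a`[pact sg (p + u), j] * b`[j, pact tau u])); last first.
    move=> u _; rewrite entM // pact_lt //.
      by rewrite ltn_add2l.
    by rewrite (leq_trans (ltn_ord u) (leq_addr _ _)).
  rewrite bigA_distr_bigA /= mulr_sumr; apply: eq_bigr => k _.
  rewrite big_split /= /GA /GB.
  move: ((-1) ^+ sg) ((-1) ^+ tau) (\prod_(k0 < p) a`[pact sg k0, k0])
        (\prod_(t < q) b`[p + s + t, pact tau (s + t)])
        (\prod_(i < s) a`[pact sg (p + i), k i]) (\prod_(i < s) b`[k i, pact tau i]).
  move=> x1 x2 x3 x4 x5 x6; ring.
rewrite (eq_bigr (fun sg => \sum_k \sum_tau GA sg k * GB tau k)); last first.
  by move=> sg _; rewrite exchange_big.
rewrite exchange_big /=.
rewrite (eq_bigr (fun k => (\sum_sg GA sg k) * (\sum_tau GB tau k))); last first.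
  move=> k _; rewrite mulr_suml; apply: eq_bigr => sg _; by rewrite mulr_sumr.
rewrite /GA /GB.
under eq_bigr do rewrite sumGA sumGB.
rewrite (bigID (mem (mk p q @: [set: 'S_s]))) /=.
rewrite [X in _ + X]big1 ?addr0; last first.
  move=> k kS.
  have [->|nA] := eqVneq (\det (\matrix_(i < p + s, j < p + s)
            a`[i, if (j < p)%N then (j : nat) else kf k (j - p)%N])) 0.
    by rewrite mul0r.
  have [->|nB] := eqVneq (\det (\matrix_(i < s + q, j < s + q)
            b`[if (i < s)%N then kf k i else (p + s + (i - s))%N, j])) 0.
    by rewrite mulr0.
  have [pi ek] := @good _ p s q k (fun i j => a`[i, j]) (fun i j => b`[i, j]) nA nB.
  by move: kS; rewrite ek imset_f ?inE.
rewrite big_imset /=; last by move=> x y _ _; apply: mk_inj.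
rewrite -card_Sn -cardsT -sumr_const; apply: eq_bigr => pi _.
have -> : \matrix_(i < p + s, j < p + s)
            a`[i, if (j < p)%N then (j : nat) else kf (mk p q pi) (j - p)%N]
   = \matrix_(i < p + s, j < p + s)
       (fun x y => a`[x, y]) i (if (j < p)%N then (j : nat) else (p + pact pi (j - p))%N).
  apply/matrixP => i j; rewrite !mxE; case: ifP => // hj; rewrite kf_mk //.
  by have := ltn_ord j; move/negbT: hj; lia.
have -> : \matrix_(i < s + q, j < s + q)
            b`[if (i < s)%N then kf (mk p q pi) i else (p + s + (i - s))%N, j]
   = \matrix_(i < s + q, j < s + q)
       (fun x y => b`[p + x, y]) (if (i < s)%N then pact pi i else (i : nat)) j.
  apply/matrixP => i j; rewrite !mxE; case: ifP => hi; first by rewrite kf_mk.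
  by congr (b`[_, _]); move/negbT: hi; lia.
rewrite signA (@signB _ s q (fun x y => b`[p + x, y])) mulrACA -expr2 sqrr_sign mul1r.
done.
Qed.

(* 0-based indices: paper's index k corresponds to k-1 here.
   s = l + m - n, r - 1 = n - l.  R is a commutative Q-algebra. *)
Theorem mainTheorem15 (R : comAlgType rat) (n l m : nat)
  (hl : (1 <= l)%N) (hm : (1 <= m)%N) (hln : (l <= n)%N) (hmn : (m <= n)%N)
  (hlm : (n < l + m)%N)
  (a : 'M[R]_(m, n)) (b : 'M[R]_(n, l)) :
  let s := (l + m - n)%N in
  let c := a *m b in
  \det (\matrix_(i < m, j < m) a`[i, j]) *
  \det (\matrix_(i < l, j < l) b`[n - l + i, j])%N
  = ((s`!%:R : rat)^-1) *:
    \sum_(sigma : 'S_m) \sum_(tau : 'S_l)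
      ((-1) ^+ sigma * (-1) ^+ tau *
       (\prod_(k < n - l) a`[pact sigma k, k]) *
       (\prod_(t < l - s) b`[m + t, pact tau (s + t)]) *
       (\prod_(u < s) c`[pact sigma (n - l + u), pact tau u])).
Proof.
move=> s c.
have [p [s0 [q [En Em El]]]] :
    exists p s0 q, [/\ n = (p + s0 + q)%N, m = (p + s0)%N & l = (s0 + q)%N].
  by exists (n - l)%N, (l + m - n)%N, (n - m)%N; split; lia.
subst n m l.
have -> : s = s0 by rewrite /s; lia.
have -> : (p + s0 + q - (s0 + q) = p)%N by lia.
have -> : (s0 + q - s0 = q)%N by lia.
rewrite /c core.
rewrite -scaler_nat scalerA mulVf ?scale1r // Num.Theory.pnatr_eq0 -lt0n fact_gt0.
done.
Qed.
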